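(* There is a one-to-one correspondence between isomorphism classes of complex unitary 3-Leibniz algebras $\mathbb{V}$ and isomorphism classes of pairs $(\mathfrak{g},\mathbb{V})$ where $\mathfrak{g}$ is a metric real Lie algebra and $\mathbb{V}$ is a faithful complex unitary representation of $\mathfrak{g}$.
   Context: All vector spaces are finite-dimensional. A hermitian form $h$ on a complex vector space is complex linear in the first argument, antilinear in the second, satisfies $h(u,v)=\overline{h(v,u)}$, and is assumed nondegenerate. A complex unitary 3-Leibniz algebra is a complex vector space $\mathbb{V}$ with a hermitian form $h$ and a map $[\![-,-,-]\!]:\mathbb{V}^3\to\mathbb{V}$ which is complex linear in the first and third arguments and complex antilinear in the second, satisfying for all $v,w,x,y,z$: unitarity $h([\![v,w,x]\!],y)=h(x,[\![w,v,y]\!])$; symmetry $h([\![v,w,x]\!],y)=h([\![x,y,v]\!],w)$; fundamental identity $[\![x,y,[\![v,w,z]\!]]\!]=[\![[\![x,y,v]\!],w,z]\!]-[\![v,[\![y,x,w]\!],z]\!]+[\![v,w,[\![x,y,z]\!]]\!]$. An isomorphism of such algebras is a complex linear bijection preserving the bracket and $h$. A metric real Lie algebra is a real Lie algebra with a nondegenerate symmetric ad-invariant bilinear form (any signature). A complex unitary representation of $\mathfrak{g}$ is a Lie algebra homomorphism $\mathfrak{g}\to\mathfrak{u}(\mathbb{V})$, i.e. to complex linear maps with $h(x\cdot u,v)+h(u,x\cdot v)=0$; faithful means injective. Pairs $(\mathfrak{g}_V,\mathbb{V})$, $(\mathfrak{g}_W,\mathbb{W})$ (with $\mathfrak{g}$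 viewed inside $\mathfrak{u}$ via the faithful representation) are isomorphic if there is a complex linear isometry $\varphi:\mathbb{V}\to\mathbb{W}$ with $\mathfrak{g}_W=\varphi\circ\mathfrak{g}_V\circ\varphi^{-1}$ and $x\mapsto\varphi x\varphi^{-1}$ an isometry of metric Lie algebras. *)

(* Defs.v *)
(* Complex scalars are C := R[i] for R : realType (the real
   numbers of MathComp-Analysis); V = 'cV[C]_n (every finite-dimensional
   complex vector space is isomorphic to some C^n). *)
From HB Require Import structures.
From mathcomp Require Import all_boot all_order all_algebra.
From mathcomp Require Import complex.
From mathcomp Require Import reals.
Set Implicit Arguments. Unset Strict Implicit. Unset Printing Implicit Defensive.
Import Order.TTheory GRing.Theory Num.Theory.
Local Open Scope ring_scope.

Section Defs.
Variable R : realType.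
Local Notation C := (R[i]).

Definition RtoC (r : R) : C := Complex r 0.
Definition iC : C := Complex 0 1.

Definition clinear n m (f : 'cV[C]_n -> 'cV[C]_m) : Prop :=
  forall (a : C) (u v : 'cV[C]_n), f (a *: u + v) = a *: f u + f v.

Definition hermitian_form n (h : 'cV[C]_n -> 'cV[C]_n -> C) : Prop :=
  [/\ forall (a : C) u v w, h (a *: u + v) w = a * h u w + h v w,
      forall u v, h u v = (h v u)^*
    & forall u, (forall v, h u v = 0) -> u = 0].

Definition unitary3Leibniz n (h : 'cV[C]_n -> 'cV[C]_n -> C)
    (br : 'cV[C]_n -> 'cV[C]_n -> 'cV[C]_n -> 'cV[C]_n) : Prop :=
  [/\
      forall (a : C) v v' w x, br (a *: v + v') w x = a *: br v w x + br v' w x,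
      forall (a : C) v w w' x, br v (a *: w + w') x = a^* *: br v w x + br v w' x,
      forall (a : C) v w x x', br v w (a *: x + x') = a *: br v w x + br v w x',
      forall v w x y, h (br v w x) y = h x (br w v y)
    & [/\
      forall v w x y, h (br v w x) y = h (br x y v) w
    &
      forall x y v w z,
        br x y (br v w z) =
        br (br x y v) w z - br v (br y x w) z + br v w (br x y z)]].

Definition iso3Leibniz n m
    (h : 'cV[C]_n -> 'cV[C]_n -> C)
    (br : 'cV[C]_n -> 'cV[C]_n -> 'cV[C]_n -> 'cV[C]_n)
    (h' : 'cV[C]_m -> 'cV[C]_m -> C)
    (br' : 'cV[C]_m -> 'cV[C]_m -> 'cV[C]_m -> 'cV[C]_m) : Prop :=
  exists phi : 'cV[C]_n -> 'cV[C]_m,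
    [/\ clinear phi, bijective phi,
        forall x y z, phi (br x y z) = br' (phi x) (phi y) (phi z)
      & forall x y, h' (phi x) (phi y) = h x y].

Definition in_u n (h : 'cV[C]_n -> 'cV[C]_n -> C) (X : 'M[C]_n) : Prop :=
  forall u v, h (X *m u) v + h u (X *m v) = 0.

(** A pair (g, V): g is a real Lie algebra, realised (via the faithful
    representation) as a real Lie subalgebra of u(C^n, h) given by the
    predicate g, together with a metric B : g x g -> R (nondegenerate,
    symmetric, bilinear, ad-invariant).  Values of B outside g are irrelevant. *)
Definition metric_faithful_pair n (h : 'cV[C]_n -> 'cV[C]_n -> C)
    (g : 'M[C]_n -> Prop) (B : 'M[C]_n -> 'M[C]_n -> R) : Prop :=
  [/\
      forall X, g X -> in_u h X,
      g 0,
      forall (r : R) X Y, g X -> g Y -> g (RtoC r *: X + Y),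
      forall X Y, g X -> g Y -> g (X * Y - Y * X)
    & [/\
      forall (r : R) X Y Z, g X -> g Y -> g Z ->
         B (RtoC r *: X + Y) Z = r * B X Z + B Y Z,
      forall X Y, g X -> g Y -> B X Y = B Y X,
      forall X, g X -> (forall Y, g Y -> B X Y = 0) -> X = 0
    &
      forall X Y Z, g X -> g Y -> g Z ->
         B (X * Y - Y * X) Z + B Y (X * Z - Z * X) = 0]].

Definition conj_by n m (phi : 'cV[C]_n -> 'cV[C]_m) (X : 'M[C]_n) (Y : 'M[C]_m)
  : Prop := forall v, Y *m phi v = phi (X *m v).

Definition isoPair n m
    (h : 'cV[C]_n -> 'cV[C]_n -> C) (g : 'M[C]_n -> Prop) (B : 'M[C]_n -> 'M[C]_n -> R)
    (h' : 'cV[C]_m -> 'cV[C]_m -> C) (g' : 'M[C]_m -> Prop) (B' : 'M[C]_m -> 'M[C]_m -> R)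
  : Prop :=
  exists phi : 'cV[C]_n -> 'cV[C]_m,
    [/\ clinear phi, bijective phi,
        forall x y, h' (phi x) (phi y) = h x y
      & [/\ (forall X, g X -> exists2 Y, g' Y & conj_by phi X Y),
        (forall Y, g' Y -> exists2 X, g X & conj_by phi X Y)
      & forall X1 X2 Y1 Y2, g X1 -> g X2 -> conj_by phi X1 Y1 -> conj_by phi X2 Y2 ->
           B' Y1 Y2 = B X1 X2]].

(** The correspondence of the paper: the 3-bracket is [[x,y,z]] = D(x,y).z,
    where D(x,y) = X1 + i X2 lies in the complexification of g and is
    defined by (X, D(x,y)) = h(X.x, y) for all X in g, the metric being
    extended complex-bilinearly. *)
Definition corresponds n (h : 'cV[C]_n -> 'cV[C]_n -> C)
    (br : 'cV[C]_n -> 'cV[C]_n -> 'cV[C]_n -> 'cV[C]_n)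
    (g : 'M[C]_n -> Prop) (B : 'M[C]_n -> 'M[C]_n -> R) : Prop :=
  forall x y, exists X1 X2,
    [/\ g X1, g X2,
        forall z, br x y z = (X1 + iC *: X2) *m z
      & forall X, g X -> h (X *m x) y = RtoC (B X X1) + iC * RtoC (B X X2)].

End Defs.

(* Main.v *)
Require Import Defs.
From HB Require Import structures.
From mathcomp Require Import all_boot all_order all_algebra.
From mathcomp Require Import complex reals.
From mathcomp Require Import ring lra.
From Stdlib Require Import Classical ClassicalEpsilon.
Set Implicit Arguments. Unset Strict Implicit. Unset Printing Implicit Defensive.
Import Order.TTheory GRing.Theory Num.Theory.
Local Open Scope ring_scope.
Section Cplx.
Variable R : realType.
Local Notation C := R[i].
Lemma conjE (a b : R) : (Complex a b)^* = Complex a (-b).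
Proof. by []. Qed.
Lemma mulE (a b c d : R) : (Complex a b) * (Complex c d) = Complex (a*c - b*d) (a*d + b*c).
Proof. by []. Qed.
Lemma addE (a b c d : R) : (Complex a b) + (Complex c d) = Complex (a+c) (b+d).
Proof. by []. Qed.
Lemma oppE (a b : R) : - (Complex a b) = Complex (-a) (-b).
Proof. by []. Qed.
Lemma zeroE : (0 : C) = Complex 0 0.
Proof. by []. Qed.
Lemma oneE : (1 : C) = Complex 1 0.
Proof. by []. Qed.
Lemma RtoCE (r : R) : RtoC r = Complex r 0. Proof. by []. Qed.
Lemma iCE : iC R = Complex 0 1. Proof. by []. Qed.
Lemma RtoCD (a b : R) : RtoC (a + b) = RtoC a + RtoC b.
Proof. by rewrite !RtoCE addE addr0. Qed.
Lemma RtoCM (a b : R) : RtoC (a * b) = RtoC a * RtoC b.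
Proof. by rewrite !RtoCE mulE !mulr0 !mul0r subr0 addr0. Qed.
Lemma RtoCN (a : R) : RtoC (- a) = - RtoC a.
Proof. by rewrite !RtoCE oppE oppr0. Qed.
Lemma RtoC0 : RtoC (0:R) = 0. Proof. by []. Qed.
Lemma RtoC1 : RtoC (1:R) = 1. Proof. by []. Qed.
Lemma RtoCB (a b : R) : RtoC (a - b) = RtoC a - RtoC b.
Proof. by rewrite RtoCD RtoCN. Qed.
Lemma RtoC_inj (a b : R) : RtoC a = RtoC b -> a = b.
Proof. by case. Qed.
Lemma conjRtoC (a : R) : (RtoC a)^* = RtoC a.
Proof. by rewrite RtoCE conjE oppr0. Qed.
Lemma iCiC : iC R * iC R = -1.
Proof. rewrite iCE mulE oneE oppE; congr Complex; ring. Qed.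
Lemma conjiC : (iC R)^* = - iC R.
Proof. by rewrite iCE conjE oppE oppr0. Qed.
Lemma cdecomp (c : C) : c = RtoC (complex.Re c) + iC R * RtoC (complex.Im c).
Proof. case: c => a b /=; rewrite !RtoCE iCE mulE addE; congr Complex; ring. Qed.
Lemma ceq (a b c d : R) : RtoC a + iC R * RtoC b = RtoC c + iC R * RtoC d ->
  a = c /\ b = d.
Proof.
rewrite !RtoCE iCE !mulE !addE; case => E1 E2; split; lra.
Qed.
Lemma Re_RtoCM (r : R) (c : C) : complex.Re (RtoC r * c) = r * complex.Re c.
Proof. by case: c => a b /=; rewrite mul0r subr0. Qed.
Lemma Im_RtoCM (r : R) (c : C) : complex.Im (RtoC r * c) = r * complex.Im c.
Proof. by case: c => a b /=; rewrite mul0r addr0. Qed.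
Lemma ReD (c d : C) : complex.Re (c + d) = complex.Re c + complex.Re d.
Proof. by case: c; case: d. Qed.
Lemma ImD (c d : C) : complex.Im (c + d) = complex.Im c + complex.Im d.
Proof. by case: c; case: d. Qed.
Lemma cjD (a b : C) : (a + b)^* = a^* + b^*.
Proof. by case: a => a1 a2; case: b => b1 b2; rewrite addE !conjE addE opprD. Qed.
Lemma cjM (a b : C) : (a * b)^* = a^* * b^*.
Proof.
case: a => a1 a2; case: b => b1 b2; rewrite mulE !conjE mulE.
congr Complex; ring.
Qed.
Lemma cjN (a : C) : (- a)^* = - a^*.
Proof. by case: a => a1 a2; rewrite oppE !conjE oppE. Qed.
Lemma cj0 : (0 : C)^* = 0.
Proof. by rewrite zeroE conjE oppr0. Qed.
Lemma cjK (a : C) : a^*^* = a.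
Proof. by case: a => a1 a2; rewrite !conjE opprK. Qed.
End Cplx.

Section LA.
Variable R : realType.
Local Notation C := R[i].
Variable n : nat.
Local Notation T := 'M[C]_n.

Definition subsp (P : T -> Prop) :=
  P 0 /\ forall (r : R) X Y, P X -> P Y -> P (RtoC r *: X + Y).

Definition comb k (c : 'rV[R]_k) (b : 'I_k -> T) : T :=
  \sum_(i < k) RtoC (c 0 i) *: b i.

Lemma subsp_comb P k (c : 'rV[R]_k) b : subsp P -> (forall i, P (b i)) ->
  P (comb c b).
Proof.
move=> [P0 PL] Pb; rewrite /comb; apply: (big_ind P) => //.
  by move=> x y Px Py; rewrite -[x]scale1r -RtoC1; apply: PL.
move=> i _; rewrite -[_ *: _]addr0; exact: PL.
Qed.

Lemma subspN P X : subsp P -> P X -> P (- X).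
Proof.
move=> [P0 PL] PX; have := PL (-1) X 0 PX P0.
by rewrite addr0 RtoCN RtoC1 scaleN1r.
Qed.

Lemma subspB P X Y : subsp P -> P X -> P Y -> P (X - Y).
Proof.
move=> sP PX PY; have [P0 PL] := sP.
have := PL 1 X (- Y) PX (subspN sP PY); by rewrite RtoC1 scale1r.
Qed.

Lemma subspD P X Y : subsp P -> P X -> P Y -> P (X + Y).
Proof.
move=> [P0 PL] PX PY; have := PL 1 X Y PX PY; by rewrite RtoC1 scale1r.
Qed.

Lemma subspZ P r X : subsp P -> P X -> P (RtoC r *: X).
Proof. move=> [P0 PL] PX; have := PL r X 0 PX P0; by rewrite addr0. Qed.

Lemma combD k (c d : 'rV[R]_k) b : comb (c + d) b = comb c b + comb d b.
Proof.
rewrite /comb -big_split /=; apply: eq_bigr => i _.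
by rewrite mxE RtoCD scalerDl.
Qed.

Lemma combZ k (r : R) (c : 'rV[R]_k) b : comb (r *: c) b = RtoC r *: comb c b.
Proof.
rewrite /comb scaler_sumr; apply: eq_bigr => i _.
by rewrite mxE RtoCM scalerA.
Qed.

Lemma comb0 k (b : 'I_k -> T) : comb 0 b = 0.
Proof. rewrite /comb big1 // => i _; by rewrite mxE RtoC0 scale0r. Qed.

Lemma comb_delta k (i : 'I_k) b : comb (delta_mx 0 i) b = b i.
Proof.
rewrite /comb (bigD1 i) //= big1 ?addr0 ?mxE ?eqxx //= ?RtoC1 ?scale1r //.
by move=> j /negPf nji; rewrite mxE nji andbF RtoC0 scale0r.
Qed.

Definition rlinear (P : T -> Prop) (f : T -> R) :=
  forall (r : R) X Y, P X -> P Y -> f (RtoC r *: X + Y) = r * f X + f Y.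

Lemma rlinear_comb P f k (c : 'rV[R]_k) b : subsp P -> rlinear P f ->
  (forall i, P (b i)) -> f (comb c b) = \sum_i c 0 i * f (b i).
Proof.
move=> sP fL Pb; rewrite /comb.
have P0 : P 0 by case: sP.
have f0 : f 0 = 0.
  have := fL 1 0 0 P0 P0; rewrite scaler0 addr0 => E; lra.
have : P (\sum_(i < k) RtoC (c 0 i) *: b i) /\
   f (\sum_(i < k) RtoC (c 0 i) *: b i) = \sum_i c 0 i * f (b i).
  apply: (big_ind2 (fun x y => P x /\ f x = y)).
  - by split.
  - move=> x1 x2 y1 y2 [Px <-] [Py <-]; split; first exact: subspD sP Px Py.
    by have := fL 1 x1 y1 Px Py; rewrite RtoC1 scale1r mul1r.
  - move=> i _; split; first exact: subspZ sP (Pb i).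
    by rewrite -[_ *: _]addr0 fL ?f0 ?addr0.
by case.
Qed.

Definition EM (X : T) : 'rV[R]_(n * n + n * n) :=
  row_mx (mxvec (map_mx (@complex.Re R) X)) (mxvec (map_mx (@complex.Im R) X)).

Lemma EML (r : R) X Y : EM (RtoC r *: X + Y) = r *: EM X + EM Y.
Proof.
rewrite /EM scale_row_mx add_row_mx -!linearZ -!linearD /=.
congr (row_mx (mxvec _) (mxvec _)); apply/matrixP => i j; rewrite !mxE.
  by rewrite ReD Re_RtoCM.
by rewrite ImD Im_RtoCM.
Qed.

Lemma EM0 X : EM X = 0 -> X = 0.
Proof.
rewrite /EM -row_mx0 => /eq_row_mx [/eqP]; rewrite mxvec_eq0 => /eqP E1 /eqP.
rewrite mxvec_eq0 => /eqP E2.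
apply/matrixP => i j; rewrite mxE.
move/matrixP/(_ i j): E1; move/matrixP/(_ i j): E2.
rewrite !mxE; by case: (X i j) => a b /= -> ->.
Qed.

Lemma EM_0 : EM 0 = 0.
Proof.
have := EML 1 0 0; rewrite scaler0 addr0 scale1r -{1}[EM 0]add0r.
by move/addIr.
Qed.

Definition EMb k (b : 'I_k -> T) : 'M[R]_(k, n * n + n * n) :=
  \matrix_(i < k) EM (b i).

Lemma EM_sum I (s : seq I) (F : I -> T) :
  EM (\sum_(i <- s) F i) = \sum_(i <- s) EM (F i).
Proof.
elim/big_rec2: _ => [|i y1 y2 _ E]; first exact: EM_0.
by rewrite -E; have := EML 1 (F i) y2; rewrite RtoC1 !scale1r.
Qed.

Lemma EM_comb k (c : 'rV[R]_k) b : EM (comb c b) = c *m EMb b.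
Proof.
rewrite mulmx_sum_row /comb EM_sum; apply: eq_bigr => i _.
rewrite -[_ *: b i]addr0 EML.
by rewrite EM_0 addr0 rowK.
Qed.

Definition indep k (b : 'I_k -> T) := forall c, comb c b = 0 -> c = 0.

Lemma rowfree_ker (F : fieldType) m p (A : 'M[F]_(m, p)) :
  (forall r : 'rV_m, r *m A = 0 -> r = 0) -> row_free A.
Proof.
move=> H; rewrite -kermx_eq0; apply/eqP/row_matrixP => j; rewrite row0.
by apply: H; rewrite -row_mul mulmx_ker row0.
Qed.

Lemma indep_le k (b : 'I_k -> T) : indep b -> (k <= n * n + n * n)%N.
Proof.
move=> ib; have rf : row_free (EMb b).
  apply: rowfree_ker => r; rewrite -EM_comb => /EM0; exact: ib.
by move/eqP: rf => <-; apply: rank_leq_col.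
Qed.

Definition lastx k (b : 'I_k -> T) (X : T) : 'I_k.+1 -> T :=
  fun i => if unlift ord_max i is Some j then b j else X.

Lemma comb_lastx k (c : 'rV[R]_k.+1) b X :
  comb c (lastx b X) = comb (\row_j c 0 (lift ord_max j)) b + RtoC (c 0 ord_max) *: X.
Proof.
rewrite /comb big_ord_recr /=; congr (_ + _).
  apply: eq_bigr => j _; rewrite mxE /lastx.
  have -> : widen_ord (leqnSn k) j = lift ord_max j.
    by apply: val_inj; rewrite /= /bump leqNgt ltn_ord.
  by rewrite liftK.
by rewrite /lastx unlift_none.
Qed.

Lemma basis_exists P : subsp P -> exists k (b : 'I_k -> T),
  [/\ forall i, P (b i), forall X, P X -> exists c, X = comb c b & indep b].
Proof.
move=> sP.
pose Ind k := exists b : 'I_k -> T, (forall i, P (b i)) /\ indep b.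
have Ind0 : Ind 0%N.
  exists (fun i => 0); split; first by case.
  by move=> c _; apply/rowP; case.
have [k [Ik nIk]] : exists k, Ind k /\ ~ Ind k.+1.
  apply: NNPP => Hn.
  have step : forall k, Ind k -> Ind k.+1.
    move=> k Ik; apply: NNPP => nI; apply: Hn; by exists k.
  have : Ind (n * n + n * n).+1.
    elim: (n * n + n * n).+1 => // m IH; exact: step.
  by case=> b [_ /indep_le]; rewrite ltnn.
case: Ik => b [Pb ib]; exists k, b; split => // X PX.
apply: NNPP => nX; apply: nIk; exists (lastx b X); split.
  by move=> i; rewrite /lastx; case: unlift.
move=> c; rewrite comb_lastx => E.
have cm0 : c 0 ord_max = 0.
  apply: NNPP => /eqP nz; apply: nX.
  exists ((- (c 0 ord_max)^-1) *: \row_j c 0 (lift ord_max j)).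
  rewrite combZ.
  have -> : comb (\row_j c 0 (lift ord_max j)) b = - (RtoC (c 0 ord_max) *: X).
    by apply/eqP; rewrite -addr_eq0 E.
  by rewrite scalerN scalerA -RtoCM mulNr mulVf // RtoCN RtoC1 scaleN1r opprK.
move: E; rewrite cm0 RtoC0 scale0r addr0 => /ib E.
apply/rowP => i; rewrite mxE.
case: (unliftP ord_max i) => [j ->|->] //.
by move/rowP/(_ j): E; rewrite !mxE.
Qed.

End LA.
Section LB.
Variable R : realType.
Local Notation C := R[i].
Variable n : nat.
Local Notation T := 'M[C]_n.
Variables (P : T -> Prop) (B : T -> T -> R).
Hypothesis sP : subsp P.
Hypothesis BL : forall (r : R) X Y Z, P X -> P Y -> P Z ->
  B (RtoC r *: X + Y) Z = r * B X Z + B Y Z.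
Hypothesis BS : forall X Y, P X -> P Y -> B X Y = B Y X.
Hypothesis BN : forall X, P X -> (forall Y, P Y -> B X Y = 0) -> X = 0.

Lemma BrlinL W : P W -> rlinear P (fun X => B X W).
Proof. by move=> PW r X Y PX PY; apply: BL. Qed.

Lemma BrlinR W : P W -> rlinear P (fun X => B W X).
Proof.
move=> PW r X Y PX PY /=.
rewrite BS //; last by apply: (proj2 sP).
by rewrite BL // !(BS PW).
Qed.

Lemma comb_sum k I (s : seq I) (F : I -> 'rV[R]_k) (b : 'I_k -> T) :
  comb (\sum_(i <- s) F i) b = \sum_(i <- s) comb (F i) b.
Proof.
elim/big_rec2: _ => [|i y1 y2 _ E]; first exact: comb0.
by rewrite combD E.
Qed.

Lemma comb_mul k p (D : 'rV[R]_p) (A : 'M[R]_(p, k)) (b : 'I_k -> T) :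
  comb (D *m A) b = comb D (fun j => comb (row j A) b).
Proof.
rewrite mulmx_sum_row comb_sum /comb; apply: eq_bigr => j _.
by rewrite -/(comb _ _) combZ.
Qed.

Section Basis.
Variables (k : nat) (b : 'I_k -> T).
Hypotheses (Pb : forall i, P (b i)) (sb : forall X, P X -> exists c, X = comb c b)
  (ib : indep b).

Definition gram : 'M[R]_k := \matrix_(i, j) B (b i) (b j).

Lemma B_comb_l (c : 'rV[R]_k) j : B (comb c b) (b j) = (c *m gram) 0 j.
Proof.
rewrite (rlinear_comb c sP (BrlinL (Pb j)) Pb) mxE.
by apply: eq_bigr => i _; rewrite mxE.
Qed.

Lemma B_comb_r Z (d : 'rV[R]_k) : P Z -> B Z (comb d b) = \sum_j d 0 j * B Z (b j).
Proof. move=> PZ; exact: (rlinear_comb d sP (BrlinR PZ) Pb). Qed.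

Lemma gram_unit : gram \in unitmx.
Proof.
rewrite -row_free_unit; apply: rowfree_ker => r E; apply: ib.
have Pc : P (comb r b) by apply: subsp_comb.
apply: BN => // Y PY; have [d ->] := sb PY.
rewrite B_comb_r // big1 // => j _; by rewrite B_comb_l E mxE mulr0.
Qed.

Lemma gram_sym : gram^T = gram.
Proof. by apply/matrixP => i j; rewrite !mxE BS. Qed.

End Basis.

Lemma riesz f : rlinear P f -> exists Y, P Y /\ forall X, P X -> B X Y = f X.
Proof.
move=> fL; have [k [b [Pb sb ib]]] := basis_exists sP.
pose fv : 'rV[R]_k := \row_i f (b i).
pose d := fv *m invmx (gram b).
exists (comb d b); split; first exact: subsp_comb.
move=> X PX; have [c ->] := sb X PX.
rewrite (rlinear_comb c sP fL Pb).
rewrite (rlinear_comb c sP (BrlinL (subsp_comb d sP Pb)) Pb).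
apply: eq_bigr => i _; congr (_ * _).
rewrite BS //; last exact: subsp_comb.
rewrite (B_comb_l Pb) /d mulmxKV ?mxE //; exact: gram_unit.
Qed.

Lemma spanning S : subsp S -> (forall X, S X -> P X) ->
  (forall X, P X -> (forall Y, S Y -> B X Y = 0) -> X = 0) ->
  forall X, P X -> S X.
Proof.
move=> sS SP SN X PX.
have [k [b [Pb sb ib]]] := basis_exists sP.
have [p [s [Ss ss is_]]] := basis_exists sS.
have H : forall j, exists c, s j = comb c b.
  by move=> j; apply: sb; apply: SP.
have [a Ea] := fin_all_exists H.
pose A : 'M[R]_(p, k) := \matrix_j a j.
have rQ : row_free (gram b *m A^T).
  apply: rowfree_ker => c E.
  have Pc : P (comb c b) by apply: subsp_comb.
  suff : comb c b = 0 by move/ib.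
  apply: SN => // Y SY; have [e ->] := ss Y SY.
  rewrite (rlinear_comb e sP (BrlinR Pc) (fun j => SP _ (Ss j))) big1 // => j _.
  rewrite Ea.
  have -> : B (comb c b) (comb (a j) b) = (c *m (gram b *m A^T)) 0 j.
    rewrite (B_comb_r Pb) // mulmxA mxE; apply: eq_bigr => l _.
    by rewrite (B_comb_l Pb) !mxE mulrC.
  by rewrite E mxE mulr0.
have rA : row_full A.
  rewrite /row_full eqn_leq rank_leq_col /=.
  by have := mxrankM_maxr (gram b) A^T; rewrite mxrank_tr (eqP rQ).
have [c ->] := sb X PX.
have /submxP [D ->] := submx_full c rA.
rewrite comb_mul; apply: subsp_comb => // j.
by rewrite rowK -Ea.
Qed.

End LB.
Lemma mx_ext (F : pzSemiRingType) n m (A B : 'M[F]_(m, n)) :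
  (forall u : 'cV[F]_n, A *m u = B *m u) -> A = B.
Proof.
move=> H; apply/matrixP => i j.
have := H (delta_mx j 0); rewrite -!colE => /colP/(_ i); by rewrite !mxE.
Qed.
Section Herm.
Variable R : realType.
Local Notation C := R[i].
Variable n : nat.
Local Notation V := 'cV[C]_n.
Variable h : V -> V -> C.
Hypothesis hf : hermitian_form h.

Lemma hL a u v w : h (a *: u + v) w = a * h u w + h v w.
Proof. by case: hf => H _ _; apply: H. Qed.
Lemma hC u v : h u v = (h v u)^*.
Proof. by case: hf => _ H _; apply: H. Qed.
Lemma hN1 u : (forall v, h u v = 0) -> u = 0.
Proof. by case: hf => _ _ H; apply: H. Qed.

Lemma h0l w : h 0 w = 0.
Proof.
have := hL 1 0 0 w; rewrite scaler0 addr0 mul1r -{1}[h 0 w]add0r.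
by move/addIr.
Qed.
Lemma hDl u v w : h (u + v) w = h u w + h v w.
Proof. by have := hL 1 u v w; rewrite scale1r mul1r. Qed.
Lemma hZl a u w : h (a *: u) w = a * h u w.
Proof. by have := hL a u 0 w; rewrite addr0 h0l addr0. Qed.
Lemma hNl u w : h (- u) w = - h u w.
Proof. by rewrite -scaleN1r hZl mulN1r. Qed.
Lemma hBl u v w : h (u - v) w = h u w - h v w.
Proof. by rewrite hDl hNl. Qed.
Lemma h0r w : h w 0 = 0.
Proof. by rewrite hC h0l cj0. Qed.
Lemma hDr u v w : h w (u + v) = h w u + h w v.
Proof. by rewrite hC hDl cjD -!hC. Qed.
Lemma hZr a u w : h w (a *: u) = a^* * h w u.
Proof. by rewrite hC hZl cjM -hC. Qed.
Lemma hNr u w : h w (- u) = - h w u.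
Proof. by rewrite hC hNl cjN -hC. Qed.
Lemma hBr u v w : h w (u - v) = h w u - h w v.
Proof. by rewrite hDr hNr. Qed.
Lemma hN2 v : (forall u, h u v = 0) -> v = 0.
Proof. move=> H; apply: hN1 => u; by rewrite hC H cj0. Qed.

Lemma h_suml I (s : seq I) (F : I -> V) w :
  h (\sum_(i <- s) F i) w = \sum_(i <- s) h (F i) w.
Proof. elim/big_rec2: _ => [|i y1 y2 _ E]; by rewrite ?h0l // hDl E. Qed.
Lemma h_sumr I (s : seq I) (F : I -> V) w :
  h w (\sum_(i <- s) F i) = \sum_(i <- s) h w (F i).
Proof. elim/big_rec2: _ => [|i y1 y2 _ E]; by rewrite ?h0r // hDr E. Qed.

Lemma h_ext1 x y : (forall v, h x v = h y v) -> x = y.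
Proof.
move=> H; apply/eqP; rewrite -subr_eq0; apply/eqP/hN1 => v.
by rewrite hBl H subrr.
Qed.
Lemma h_ext2 x y : (forall u, h u x = h u y) -> x = y.
Proof.
move=> H; apply/eqP; rewrite -subr_eq0; apply/eqP/hN2 => v.
by rewrite hBr H subrr.
Qed.

Lemma in_u_adj X u v : in_u h X -> h (X *m u) v = - h u (X *m v).
Proof. by move=> /(_ u v)/eqP; rewrite addr_eq0 => /eqP. Qed.

Lemma in_u0 : in_u h 0.
Proof. by move=> u v; rewrite !mul0mx h0l h0r addr0. Qed.

Lemma in_uL (r : R) X Y : in_u h X -> in_u h Y -> in_u h (RtoC r *: X + Y).
Proof.
move=> HX HY u v; rewrite !mulmxDl -!scalemxAl hDl hZl hDr hZr conjRtoC.
rewrite (in_u_adj u v HX) (in_u_adj u v HY); ring.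
Qed.

Lemma in_uZ (r : R) X : in_u h X -> in_u h (RtoC r *: X).
Proof. by move=> HX; have := in_uL r HX in_u0; rewrite addr0. Qed.
Lemma in_uD X Y : in_u h X -> in_u h Y -> in_u h (X + Y).
Proof. by move=> HX HY; have := in_uL 1 HX HY; rewrite RtoC1 scale1r. Qed.
Lemma in_uN X : in_u h X -> in_u h (- X).
Proof. by move=> HX; have := in_uZ (-1) HX; rewrite RtoCN RtoC1 scaleN1r. Qed.

Lemma in_uC X Y : in_u h X -> in_u h Y -> in_u h (X * Y - Y * X).
Proof.
move=> HX HY u v; rewrite -!mulmxE !mulmxBl -!mulmxA hBl hBr.
rewrite !(in_u_adj _ _ HX) !(in_u_adj _ _ HY) !(in_u_adj _ _ HX); ring.
Qed.

Lemma h_mx_ext (X Y : 'M[C]_n) :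
  (forall u v, h (X *m u) v = h (Y *m u) v) -> X = Y.
Proof. move=> H; apply: mx_ext => u; apply: h_ext1 => v; exact: H. Qed.
End Herm.

Section Part1.
Variable R : realType.
Local Notation C := R[i].
Variable n : nat.
Local Notation V := 'cV[C]_n.
Local Notation M := 'M[C]_n.
Variable h : V -> V -> C.
Variable br : V -> V -> V -> V.
Hypothesis hf : hermitian_form h.
Hypothesis UL : unitary3Leibniz h br.

Lemma brL1 a v v' w x : br (a *: v + v') w x = a *: br v w x + br v' w x.
Proof. by case: UL => H _ _ _ _; apply: H. Qed.
Lemma brL2 a v w w' x : br v (a *: w + w') x = a^* *: br v w x + br v w' x.
Proof. by case: UL => _ H _ _ _; apply: H. Qed.
Lemma brL3 a v w x x' : br v w (a *: x + x') = a *: br v w x + br v w x'.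
Proof. by case: UL => _ _ H _ _; apply: H. Qed.
Lemma brU v w x y : h (br v w x) y = h x (br w v y).
Proof. by case: UL => _ _ _ H _; apply: H. Qed.
Lemma brS v w x y : h (br v w x) y = h (br x y v) w.
Proof. by case: UL => _ _ _ _ [H _]; apply: H. Qed.
Lemma brF x y v w z : br x y (br v w z) =
        br (br x y v) w z - br v (br y x w) z + br v w (br x y z).
Proof. by case: UL => _ _ _ _ [_ H]; apply: H. Qed.

Lemma br01 w x : br 0 w x = 0.
Proof.
have := brL1 1 0 0 w x; rewrite scaler0 addr0 scale1r -{1}[br 0 w x]add0r.
by move/addIr.
Qed.
Lemma br02 v x : br v 0 x = 0.
Proof.
have := brL2 1 v 0 0 x; rewrite scaler0 addr0 -{1}[br v 0 x]add0r.
rewrite conjC1 scale1r; by move/addIr.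
Qed.
Lemma br03 v w : br v w 0 = 0.
Proof.
have := brL3 1 v w 0 0; rewrite scaler0 addr0 scale1r -{1}[br v w 0]add0r.
by move/addIr.
Qed.
Lemma brD1 v v' w x : br (v + v') w x = br v w x + br v' w x.
Proof. by have := brL1 1 v v' w x; rewrite !scale1r. Qed.
Lemma brD2 v w w' x : br v (w + w') x = br v w x + br v w' x.
Proof. by have := brL2 1 v w w' x; rewrite conjC1 !scale1r. Qed.
Lemma brD3 v w x x' : br v w (x + x') = br v w x + br v w x'.
Proof. by have := brL3 1 v w x x'; rewrite !scale1r. Qed.
Lemma brZ1 a v w x : br (a *: v) w x = a *: br v w x.
Proof. by have := brL1 a v 0 w x; rewrite addr0 br01 addr0. Qed.
Lemma brZ2 a v w x : br v (a *: w) x = a^* *: br v w x.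
Proof. by have := brL2 a v w 0 x; rewrite addr0 br02 addr0. Qed.
Lemma brZ3 a v w x : br v w (a *: x) = a *: br v w x.
Proof. by have := brL3 a v w x 0; rewrite addr0 br03 addr0. Qed.
Lemma brN1 v w x : br (- v) w x = - br v w x.
Proof. by rewrite -scaleN1r brZ1 scaleN1r. Qed.
Lemma brN2 v w x : br v (- w) x = - br v w x.
Proof. by rewrite -scaleN1r brZ2 cjN conjC1 scaleN1r. Qed.
Lemma br_sum1 I (s : seq I) (F : I -> V) w x :
  br (\sum_(i <- s) F i) w x = \sum_(i <- s) br (F i) w x.
Proof. elim/big_rec2: _ => [|i y1 y2 _ E]; by rewrite ?br01 // brD1 E. Qed.
Lemma br_sum2 I (s : seq I) (F : I -> V) v x :
  br v (\sum_(i <- s) F i) x = \sum_(i <- s) br v (F i) x.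
Proof. elim/big_rec2: _ => [|i y1 y2 _ E]; by rewrite ?br02 // brD2 E. Qed.
Lemma br_sum3 I (s : seq I) (F : I -> V) v w :
  br v w (\sum_(i <- s) F i) = \sum_(i <- s) br v w (F i).
Proof. elim/big_rec2: _ => [|i y1 y2 _ E]; by rewrite ?br03 // brD3 E. Qed.

Definition Dm (x y : V) : M := \matrix_(i, j) (br x y (delta_mx j 0)) i 0.

Lemma DmE x y z : Dm x y *m z = br x y z.
Proof.
have Ez : z = \sum_(j < n) z j 0 *: delta_mx j 0.
  apply/colP => i; rewrite summxE (bigD1 i) //= big1 ?addr0.
    by rewrite !mxE !eqxx mulr1.
  by move=> j /negPf nj; rewrite !mxE eq_sym nj mulr0.
rewrite {2}Ez br_sum3; apply/colP => i; rewrite summxE mxE.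
apply: eq_bigr => j _; rewrite brZ3 !mxE mulrC.
by rewrite (_ : (0 : 'I_1) = ord0) //; apply: val_inj.
Qed.

Lemma DmL1 a v v' w : Dm (a *: v + v') w = a *: Dm v w + Dm v' w.
Proof. apply: mx_ext => z; by rewrite mulmxDl -scalemxAl !DmE brL1. Qed.
Lemma DmL2 a v w w' : Dm v (a *: w + w') = a^* *: Dm v w + Dm v w'.
Proof. apply: mx_ext => z; by rewrite mulmxDl -scalemxAl !DmE brL2. Qed.
Lemma DmZ1 a v w : Dm (a *: v) w = a *: Dm v w.
Proof. apply: mx_ext => z; by rewrite -scalemxAl !DmE brZ1. Qed.
Lemma DmZ2 a v w : Dm v (a *: w) = a^* *: Dm v w.
Proof. apply: mx_ext => z; by rewrite -scalemxAl !DmE brZ2. Qed.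
Lemma DmN1 v w : Dm (- v) w = - Dm v w.
Proof. apply: mx_ext => z; by rewrite mulNmx !DmE brN1. Qed.

Definition Dsum (s : seq (V * V)) : M := \sum_(p <- s) Dm p.1 p.2.
Definition swp (s : seq (V * V)) := [seq (p.2, p.1) | p <- s].
Definition Phi (X : M) (s : seq (V * V)) := \sum_(p <- s) h (X *m p.1) p.2.

Lemma DsumE s z : Dsum s *m z = \sum_(p <- s) br p.1 p.2 z.
Proof. rewrite /Dsum mulmx_suml; apply: eq_bigr => p _; exact: DmE. Qed.

Lemma Dsum_cat s1 s2 : Dsum (s1 ++ s2) = Dsum s1 + Dsum s2.
Proof. by rewrite /Dsum big_cat. Qed.

Lemma Phi_swap sX s : Phi (Dsum sX) s = \sum_(q <- sX) h (Dsum s *m q.1) q.2.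
Proof.
rewrite /Phi.
under eq_bigr => p _ do rewrite DsumE (h_suml hf).
under [in RHS]eq_bigr => q _ do rewrite DsumE (h_suml hf).
rewrite exchange_big /=; apply: eq_bigr => q _; apply: eq_bigr => p _.
exact: brS.
Qed.

Lemma Phi_indep sX s s' : Dsum s = Dsum s' -> Phi (Dsum sX) s = Phi (Dsum sX) s'.
Proof. by move=> E; rewrite !Phi_swap E. Qed.

Lemma adjD s u v : h (Dsum s *m u) v = h u (Dsum (swp s) *m v).
Proof.
rewrite DsumE (h_suml hf) DsumE (h_sumr hf) /swp big_map.
apply: eq_bigr => p _; exact: brU.
Qed.

Lemma swpK s : swp (swp s) = s.
Proof. by rewrite /swp -map_comp map_id_in // => -[]. Qed.

Lemma Dsum_swp_u s : in_u h (Dsum s) -> Dsum (swp s) = - Dsum s.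
Proof.
move=> Hu; apply: (h_mx_ext hf) => u v.
by rewrite mulNmx (hNl hf) (in_u_adj _ _ Hu) opprK adjD swpK.
Qed.

Lemma deriv s v w z : in_u h (Dsum s) ->
  Dsum s *m br v w z = br (Dsum s *m v) w z + br v (Dsum s *m w) z + br v w (Dsum s *m z).
Proof.
move=> Hu; rewrite !DsumE.
under eq_bigr => p _ do rewrite brF.
rewrite !big_split /= -br_sum1 -br_sum3 sumrN -br_sum2.
have -> : \sum_(i <- s) br i.2 i.1 w = Dsum (swp s) *m w.
  by rewrite DsumE /swp big_map.
by rewrite Dsum_swp_u // mulNmx brN2 opprK -!DsumE.
Qed.

Lemma commD s v w : in_u h (Dsum s) ->
  Dsum s * Dm v w - Dm v w * Dsum s = Dm (Dsum s *m v) w + Dm v (Dsum s *m w).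
Proof.
move=> Hu; apply: mx_ext => z.
rewrite -!mulmxE mulmxBl mulmxDl -!mulmxA !DmE deriv //.
by rewrite addrK.
Qed.

Fixpoint sc (X : M) (s : seq (V * V)) :=
  if s is p :: s' then (X *m p.1, p.2) :: (p.1, X *m p.2) :: sc X s' else [::].

Lemma Dsum_sc s s' : in_u h (Dsum s) ->
  Dsum (sc (Dsum s) s') = Dsum s * Dsum s' - Dsum s' * Dsum s.
Proof.
move=> Hu; elim: s' => [|p s' IH].
  by rewrite /Dsum /sc /= !big_nil mulr0 mul0r subrr.
rewrite /= /Dsum !big_cons -/(Dsum s') -/(Dsum (sc _ s')) IH /=.
rewrite addrA -commD // mulrDr mulrDl.
set A := Dsum s; set B := Dm p.1 p.2; set D := Dsum s'.
by rewrite opprD addrACA.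
Qed.

Lemma DmN2 v w : Dm v (- w) = - Dm v w.
Proof. by rewrite -scaleN1r DmZ2 cjN conjC1 scaleN1r. Qed.

Lemma Phi_lin a X Y s : Phi (a *: X + Y) s = a * Phi X s + Phi Y s.
Proof.
rewrite /Phi mulr_sumr -big_split; apply: eq_bigr => p _.
by rewrite mulmxDl -scalemxAl (hL hf).
Qed.

Definition inL (X : M) := exists s, X = Dsum s.
Definition g1 (X : M) := in_u h X /\ inL X.
Definition rep (Y : M) := epsilon (inhabits [::]) (fun s => Y = Dsum s).
Lemma rep_spec Y : inL Y -> Y = Dsum (rep Y).
Proof. move=> H; exact: (epsilon_spec (inhabits [::]) (fun s => Y = Dsum s) H). Qed.

Definition B1 (X Y : M) : R := complex.Re (Phi X (rep Y)).

Lemma B1E X Y s : inL X -> Y = Dsum s -> B1 X Y = complex.Re (Phi X s).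
Proof.
move=> [sX ->] EY; rewrite /B1; congr complex.Re; apply: Phi_indep.
by rewrite -rep_spec -?EY //; exists s.
Qed.

Lemma Dsum_scale a s : Dsum [seq (a *: p.1, p.2) | p <- s] = a *: Dsum s.
Proof. by rewrite /Dsum big_map scaler_sumr; apply: eq_bigr => p _; rewrite DmZ1. Qed.

Lemma g1_0 : g1 0.
Proof. split; first exact: in_u0. by exists [::]; rewrite /Dsum big_nil. Qed.

Lemma g1_L (r : R) X Y : g1 X -> g1 Y -> g1 (RtoC r *: X + Y).
Proof.
move=> [uX [sX EX]] [uY [sY EY]]; split; first exact: in_uL.
exists ([seq (RtoC r *: p.1, p.2) | p <- sX] ++ sY).
by rewrite Dsum_cat Dsum_scale -EX -EY.
Qed.

Lemma g1_C X Y : g1 X -> g1 Y -> g1 (X * Y - Y * X).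
Proof.
move=> [uX [sX EX]] [uY [sY EY]]; split; first exact: in_uC.
exists (sc X sY); rewrite EX Dsum_sc -?EX //; by rewrite EY.
Qed.

Definition Ag x y := Dsum [:: (x, y); (- y, x)].

Lemma AgE x y : Ag x y = Dm x y - Dm y x.
Proof. by rewrite /Ag /Dsum !big_cons big_nil addr0 DmN1. Qed.

Lemma Ag_u x y : in_u h (Ag x y).
Proof.
move=> u v; rewrite {1}/Ag adjD -(hDr hf) -mulmxDl.
rewrite /swp /= AgE /Dsum !big_cons big_nil addr0 /= DmN2.
have -> : Dm y x - Dm x y + (Dm x y - Dm y x) = 0.
  by rewrite addrA subrK subrr.
by rewrite mul0mx (h0r hf).
Qed.

Lemma g1_Ag x y : g1 (Ag x y).
Proof. split; first exact: Ag_u. by exists [:: (x, y); (- y, x)]. Qed.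

Lemma ReCj (c : C) : complex.Re (c + c^*) = 2 * complex.Re c.
Proof. case: c => a b /=; ring. Qed.
Lemma ReiC (c : C) : complex.Re (iC R * c) = - complex.Im c.
Proof. case: c => a b /=; ring. Qed.

Lemma B1_Ag X x y : g1 X -> B1 X (Ag x y) = 2 * complex.Re (h (X *m x) y).
Proof.
move=> [uX lX]; rewrite (B1E lX (erefl _)) /Phi !big_cons big_nil addr0 /=.
rewrite mulmxN (hNl hf) (in_u_adj y x uX) opprK (hC hf y (X *m x)) ReCj //.
Qed.

Lemma B1N X : g1 X -> (forall Y, g1 Y -> B1 X Y = 0) -> X = 0.
Proof.
move=> gX H; apply: (h_mx_ext hf) => u v; rewrite mul0mx (h0l hf).
have E1 := H _ (g1_Ag u v); rewrite B1_Ag // in E1.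
have E2 := H _ (g1_Ag (iC R *: u) v); rewrite B1_Ag // in E2.
rewrite -scalemxAr (hZl hf) ReiC in E2.
rewrite (cdecomp (h (X *m u) v)).
have -> : complex.Re (h (X *m u) v) = 0 by lra.
have -> : complex.Im (h (X *m u) v) = 0 by lra.
by rewrite RtoC0 mulr0 addr0.
Qed.

Lemma B1L (r : R) X Y Z : B1 (RtoC r *: X + Y) Z = r * B1 X Z + B1 Y Z.
Proof. by rewrite /B1 Phi_lin ReD Re_RtoCM. Qed.

Lemma B1S X Y : inL X -> inL Y -> B1 X Y = B1 Y X.
Proof.
move=> lX lY; rewrite /B1 {1}(rep_spec lX) Phi_swap -(rep_spec lY).
by [].
Qed.

Lemma Phi_sc X Y s : in_u h X ->
  Phi Y (sc X s) = - Phi (X * Y - Y * X) s.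
Proof.
move=> uX; elim: s => [|p s IH]; first by rewrite /Phi !big_nil oppr0.
rewrite /= /Phi !big_cons -!/(Phi _ _) IH /=.
rewrite -!mulmxE mulmxBl -!mulmxA (hBl hf) (in_u_adj _ _ uX).
rewrite [in RHS]opprD; ring.
Qed.

Lemma ReN (c : C) : complex.Re (- c) = - complex.Re c.
Proof. by case: c. Qed.

Lemma B1_ad X Y Z : g1 X -> g1 Y -> g1 Z ->
  B1 (X * Y - Y * X) Z + B1 Y (X * Z - Z * X) = 0.
Proof.
move=> gX gY gZ; have gXY := g1_C gX gY.
case: gX => uX [sX EX]; case: gY => uY lY; case: gZ => uZ [sZ EZ].
have E : X * Z - Z * X = Dsum (sc X sZ).
  by rewrite EX Dsum_sc -?EX // EZ.
rewrite (B1E gXY.2 EZ) (B1E lY E) Phi_sc // ReN subrr //.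
Qed.

Lemma AgZ c x y : Ag (c *: x) y = c *: Dm x y - c^* *: Dm y x.
Proof. by rewrite AgE DmZ1 DmZ2. Qed.

Lemma part1 : exists (g : M -> Prop) (B : M -> M -> R),
  metric_faithful_pair h g B /\ corresponds h br g B.
Proof.
exists g1, B1; split.
  split.
  - by move=> X [].
  - exact: g1_0.
  - by move=> r X Y; apply: g1_L.
  - by move=> X Y; apply: g1_C.
  split.
  - by move=> r X Y Z _ _ _; apply: B1L.
  - by move=> X Y [_ lX] [_ lY]; apply: B1S.
  - exact: B1N.
  - exact: B1_ad.
move=> x y.
pose a : C := RtoC (2^-1).
pose cc : C := Complex 0 (- 2^-1).
exists (Ag (a *: x) y), (Ag (cc *: x) y); split.
- exact: g1_Ag.
- exact: g1_Ag.
- move=> z; rewrite -DmE; congr (_ *m _).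
  have e1 : a + iC R * cc = 1.
    rewrite /a /cc RtoCE iCE mulE addE oneE; congr Complex; lra.
  have e2 : a^* + iC R * cc^* = 0.
    rewrite /a /cc RtoCE iCE !conjE mulE addE zeroE; congr Complex; lra.
  rewrite !AgZ scalerBr !scalerA.
  have -> : a *: Dm x y - a^* *: Dm y x +
     ((iC R * cc) *: Dm x y - (iC R * cc^*) *: Dm y x) =
     (a + iC R * cc) *: Dm x y - (a^* + iC R * cc^*) *: Dm y x.
    by rewrite !scalerDl opprD addrACA.
  by rewrite e1 e2 scale0r subr0 scale1r.
- move=> X gX; rewrite !B1_Ag // -!scalemxAr !(hZl hf) /a Re_RtoCM.
  rewrite {1}(cdecomp (h (X *m x) y)); congr (RtoC _ + iC R * RtoC _).
    by field.
  by rewrite /cc; case: (h (X *m x) y) => p q /=; field.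
Qed.

End Part1.
Ltac cnorm := repeat progress rewrite ?RtoCE ?iCE ?conjE ?mulE ?addE ?oppE ?zeroE ?oneE.
Ltac gen_entries := repeat match goal with |- context [@fun_of_matrix ?T ?m ?k ?A ?i ?j] =>
   let p := fresh "p" in let q := fresh "q" in
   move: (@fun_of_matrix T m k A i j) => [p q] end.
Ltac mx_cring := apply/matrixP => ? ?; rewrite !mxE; gen_entries; cnorm; congr Complex; ring.

Section Pair.
Variable R : realType.
Local Notation C := R[i].
Variable n : nat.
Local Notation V := 'cV[C]_n.
Local Notation M := 'M[C]_n.
Variable h : V -> V -> C.
Variable g : M -> Prop.
Variable B : M -> M -> R.
Hypothesis hf : hermitian_form h.
Hypothesis mp : metric_faithful_pair h g B.

Lemma gu X : g X -> in_u h X. Proof. by case: mp => H _ _ _ _; apply: H. Qed.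
Lemma g0 : g 0. Proof. by case: mp => _ H _ _ _. Qed.
Lemma gL (r : R) X Y : g X -> g Y -> g (RtoC r *: X + Y).
Proof. by case: mp => _ _ H _ _; apply: H. Qed.
Lemma gC X Y : g X -> g Y -> g (X * Y - Y * X).
Proof. by case: mp => _ _ _ H _; apply: H. Qed.
Lemma BL (r : R) X Y Z : g X -> g Y -> g Z ->
  B (RtoC r *: X + Y) Z = r * B X Z + B Y Z.
Proof. by case: mp => _ _ _ _ [H _ _ _]; apply: H. Qed.
Lemma BS X Y : g X -> g Y -> B X Y = B Y X.
Proof. by case: mp => _ _ _ _ [_ H _ _]; apply: H. Qed.
Lemma BN X : g X -> (forall Y, g Y -> B X Y = 0) -> X = 0.
Proof. by case: mp => _ _ _ _ [_ _ H _]; apply: H. Qed.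
Lemma Bad X Y Z : g X -> g Y -> g Z ->
  B (X * Y - Y * X) Z + B Y (X * Z - Z * X) = 0.
Proof. by case: mp => _ _ _ _ [_ _ _ H]; apply: H. Qed.

Lemma gsub : subsp g. Proof. split; [exact: g0 | exact: gL]. Qed.

Lemma BL2 (r : R) X Y Z : g X -> g Y -> g Z ->
  B Z (RtoC r *: X + Y) = r * B Z X + B Z Y.
Proof.
move=> gX gY gZ; rewrite BS //; last exact: gL.
by rewrite BL // !(BS gZ).
Qed.

Lemma B0l Z : g Z -> B 0 Z = 0.
Proof.
move=> gZ; have := BL 1 g0 g0 gZ; rewrite scaler0 addr0 => E; lra.
Qed.
Lemma B0r Z : g Z -> B Z 0 = 0.
Proof. by move=> gZ; rewrite BS ?B0l //; exact: g0. Qed.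
Lemma BD2 X Y Z : g X -> g Y -> g Z -> B Z (X + Y) = B Z X + B Z Y.
Proof. by move=> gX gY gZ; have := BL2 1 gX gY gZ; rewrite RtoC1 scale1r mul1r. Qed.
Lemma BN2 X Z : g X -> g Z -> B Z (- X) = - B Z X.
Proof.
move=> gX gZ; have := BL2 (-1) gX g0 gZ.
by rewrite addr0 RtoCN RtoC1 scaleN1r B0r // addr0 mulN1r.
Qed.
Lemma BZ2 r X Z : g X -> g Z -> B Z (RtoC r *: X) = r * B Z X.
Proof.
move=> gX gZ; have := BL2 r gX g0 gZ.
by rewrite addr0 B0r // addr0.
Qed.
Lemma gN X : g X -> g (- X).
Proof. by move=> gX; have := gL (-1) gX g0; rewrite addr0 RtoCN RtoC1 scaleN1r. Qed.
Lemma gD X Y : g X -> g Y -> g (X + Y).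
Proof. by move=> gX gY; have := gL 1 gX gY; rewrite RtoC1 scale1r. Qed.
Lemma gB X Y : g X -> g Y -> g (X - Y).
Proof. by move=> gX gY; apply: gD => //; apply: gN. Qed.
Lemma gZ r X : g X -> g (RtoC r *: X).
Proof. by move=> gX; have := gL r gX g0; rewrite addr0. Qed.
Lemma BB2 X Y Z : g X -> g Y -> g Z -> B Z (X - Y) = B Z X - B Z Y.
Proof. by move=> gX gY gZ; rewrite BD2 ?BN2 //; apply: gN. Qed.

Lemma Bad2 X A Y : g X -> g A -> g Y -> B X (A * Y - Y * A) = B (X * A - A * X) Y.
Proof.
move=> gX gA gY; have := Bad gA gX gY.
have -> : A * X - X * A = - (X * A - A * X) by rewrite opprB.
have gXA := gC gX gA.
have E1 : B (- (X * A - A * X)) Y = - B (X * A - A * X) Y.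
  by rewrite (BS (gN gXA) gY) BN2 // (BS gY gXA).
rewrite E1 => E; lra.
Qed.

Definition pr X W1 W2 := RtoC (B X W1) + iC R * RtoC (B X W2).
Definition RepP x y W1 W2 := [/\ g W1, g W2 &
  forall X, g X -> h (X *m x) y = pr X W1 W2].

Lemma pr_uniq W1 W2 W1' W2' : g W1 -> g W2 -> g W1' -> g W2' ->
  (forall X, g X -> pr X W1 W2 = pr X W1' W2') -> W1 = W1' /\ W2 = W2'.
Proof.
move=> g1 g2 g1' g2' H.
have E X : g X -> B X W1 = B X W1' /\ B X W2 = B X W2' by move=> gX; apply: ceq; apply: H.
split; apply/eqP; rewrite -subr_eq0; apply/eqP; apply: BN; try exact: gB.
  move=> Y gY; rewrite (BS (gB g1 g1') gY) (BB2 g1 g1' gY).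
  have [-> _] := E Y gY; exact: subrr.
move=> Y gY; rewrite (BS (gB g2 g2') gY) (BB2 g2 g2' gY).
have [_ ->] := E Y gY; exact: subrr.
Qed.

Lemma RepP_uniq x y W1 W2 W1' W2' : RepP x y W1 W2 -> RepP x y W1' W2' ->
  W1 = W1' /\ W2 = W2'.
Proof.
move=> [g1 g2 H] [g1' g2' H']; apply: pr_uniq => // X gX.
by rewrite -H // -H'.
Qed.

Lemma RepP_ex x y : exists W : M * M, RepP x y W.1 W.2.
Proof.
have fl1 : rlinear g (fun X => complex.Re (h (X *m x) y)).
  move=> r X Y _ _ /=; by rewrite mulmxDl -scalemxAl (hL hf) ReD Re_RtoCM.
have fl2 : rlinear g (fun X => complex.Im (h (X *m x) y)).
  move=> r X Y _ _ /=; by rewrite mulmxDl -scalemxAl (hL hf) ImD Im_RtoCM.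
have [W1 [gW1 E1]] := riesz gsub BL BS BN fl1.
have [W2 [gW2 E2]] := riesz gsub BL BS BN fl2.
exists (W1, W2); split => //= X gX.
by rewrite /pr E1 // E2 // -cdecomp.
Qed.

Lemma comm_core (v w : V) (P Q Z U Ps X1 X2 Y1 Y2 Z1 Z2 U1 U2 : M) :
  g X1 -> g X2 -> g Y1 -> g Y2 -> g Z1 -> g Z2 -> g U1 -> g U2 ->
  P = X1 + iC R *: X2 -> Q = Y1 + iC R *: Y2 ->
  Z = Z1 + iC R *: Z2 -> U = U1 + iC R *: U2 ->
  (forall u w', h (P *m u) w' = h u (Ps *m w')) ->
  (forall X, g X -> h (X *m v) w = pr X Y1 Y2) ->
  (forall X, g X -> h (X *m (P *m v)) w = pr X Z1 Z2) ->
  (forall X, g X -> h (X *m v) (Ps *m w) = pr X U1 U2) ->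
  P * Q - Q * P = Z - U.
Proof.
move=> gX1 gX2 gY1 gY2 gZ1 gZ2 gU1 gU2 EP EQ EZ EU HPs HY HZ HU.
have gc A A' : g A -> g A' -> g (A * A' - A' * A) by move=> *; apply: gC.
have g11 := gc _ _ gX1 gY1; have g12 := gc _ _ gX1 gY2.
have g21 := gc _ _ gX2 gY1; have g22 := gc _ _ gX2 gY2.
have gW1 : g ((X1 * Y1 - Y1 * X1) - (X2 * Y2 - Y2 * X2)) by apply: gB.
have gW2 : g ((X1 * Y2 - Y2 * X1) + (X2 * Y1 - Y1 * X2)) by apply: gD.
have [E1 E2] : (X1 * Y1 - Y1 * X1) - (X2 * Y2 - Y2 * X2) = Z1 - U1 /\
               (X1 * Y2 - Y2 * X1) + (X2 * Y1 - Y1 * X2) = Z2 - U2.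
  apply: pr_uniq => //; try exact: gB.
  move=> X gX.
  have -> : pr X (Z1 - U1) (Z2 - U2) = pr X Z1 Z2 - pr X U1 U2.
    by rewrite /pr (BB2 gZ1 gU1 gX) (BB2 gZ2 gU2 gX) !RtoCB; ring.
  rewrite -HZ // -HU // -HPs !mulmxA -(hBl hf) -mulmxBl.
  rewrite /pr (BB2 g11 g22 gX) (BD2 g12 g21 gX).
  rewrite (Bad2 gX gX1 gY1) (Bad2 gX gX1 gY2) (Bad2 gX gX2 gY1) (Bad2 gX gX2 gY2).
  have -> : X *m P - P *m X =
     (X * X1 - X1 * X) + iC R *: (X * X2 - X2 * X).
    rewrite EP -!mulmxE mulmxDr mulmxDl -scalemxAl -scalemxAr.
    move: (X *m X1) (X *m X2) (X1 *m X) (X2 *m X) => a b c d.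
    apply/matrixP => ? ?; rewrite !mxE; ring: (iCiC R).
  have gXX1 := gc _ _ gX gX1; have gXX2 := gc _ _ gX gX2.
  rewrite mulmxDl -scalemxAl (hDl hf) (hZl hf) (HY _ gXX1) (HY _ gXX2) /pr.
  rewrite !RtoCB !RtoCD; ring: (iCiC R).
rewrite EZ EU.
have -> : Z1 + iC R *: Z2 - (U1 + iC R *: U2) = (Z1 - U1) + iC R *: (Z2 - U2).
  by rewrite scalerBr opprD addrACA.
rewrite -E1 -E2 EP EQ -!mulmxE !mulmxDl !mulmxDr -!scalemxAl -!scalemxAr.
move: (X1 *m Y1) (X1 *m Y2) (X2 *m Y1) (X2 *m Y2) => a b c d.
move: (Y1 *m X1) (Y2 *m X1) (Y1 *m X2) (Y2 *m X2) => a' b' c' d'.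
apply/matrixP => ? ?; rewrite !mxE; ring: (iCiC R).
Qed.

End Pair.
Section Part2.
Variable R : realType.
Local Notation C := R[i].
Variable n : nat.
Local Notation V := 'cV[C]_n.
Local Notation M := 'M[C]_n.
Variable h : V -> V -> C.
Variable g : M -> Prop.
Variable B : M -> M -> R.
Hypothesis hf : hermitian_form h.
Hypothesis mp : metric_faithful_pair h g B.

Definition Wd x y := epsilon (inhabits ((0 : M), (0 : M))) (fun W => RepP h g B x y W.1 W.2).
Lemma Wd_spec x y : RepP h g B x y (Wd x y).1 (Wd x y).2.
Proof. exact: (epsilon_spec _ (fun W => RepP h g B x y W.1 W.2) (RepP_ex hf mp x y)). Qed.
Definition D2 x y := (Wd x y).1 + iC R *: (Wd x y).2.
Lemma D2_eq x y W1 W2 : RepP h g B x y W1 W2 -> D2 x y = W1 + iC R *: W2.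
Proof. by move=> H; have [<- <-] := RepP_uniq mp (Wd_spec x y) H. Qed.

Lemma h_D2 x y z w : h (D2 x y *m z) w =
  h ((Wd x y).1 *m z) w + iC R * h ((Wd x y).2 *m z) w.
Proof. by rewrite /D2 mulmxDl -scalemxAl (hDl hf) (hZl hf). Qed.

Lemma D2_comb a x y v w v' w' :
  (forall X, g X -> h (X *m x) y = a * h (X *m v) w + h (X *m v') w') ->
  D2 x y = a *: D2 v w + D2 v' w'.
Proof.
move=> H; rewrite [D2 v w]/D2 [D2 v' w']/D2.
case: (Wd_spec v w) => gX1 gX2 HX; case: (Wd_spec v' w') => gY1 gY2 HY.
move: (Wd v w) (Wd v' w') gX1 gX2 HX gY1 gY2 HY => [X1 X2] [Y1 Y2] /= gX1 gX2 HX gY1 gY2 HY.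
case: a H => ar ai H.
rewrite (@D2_eq x y (RtoC ar *: X1 + (RtoC (- ai) *: X2 + Y1))
                    (RtoC ai *: X1 + (RtoC ar *: X2 + Y2))); last first.
  split; first exact: (gL mp _ gX1 (gL mp _ gX2 gY1)).
    exact: (gL mp _ gX1 (gL mp _ gX2 gY2)).
  move=> X gX; rewrite H // HX // HY // /pr.
  have gA := gL mp (- ai) gX2 gY1; have gB := gL mp ar gX2 gY2.
  rewrite !(BL2 mp) //.
  cnorm; congr Complex; ring.
rewrite (cdecomp (Complex ar ai)) /= RtoCN.
apply/matrixP => ? ?; rewrite !mxE; ring: (iCiC R).
Qed.


Lemma D2L1 a v v' w : D2 (a *: v + v') w = a *: D2 v w + D2 v' w.
Proof. apply: D2_comb => X gX; by rewrite mulmxDr -scalemxAr (hL hf). Qed.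

Lemma D2L2 a v w w' : D2 v (a *: w + w') = a^* *: D2 v w + D2 v w'.
Proof. apply: D2_comb => X gX; by rewrite (hDr hf) (hZr hf). Qed.

Lemma D2_swap v w : D2 w v = - (Wd v w).1 + iC R *: (Wd v w).2.
Proof.
case: (Wd_spec v w) => gX1 gX2 HX.
apply: D2_eq; split; first exact: (gN mp).
  by [].
move=> X gX; rewrite (in_u_adj _ _ (gu mp gX)) (hC hf w) HX // /pr (BN2 mp) //.
cnorm; congr Complex; ring.
Qed.

Lemma D2U v w x y : h (D2 v w *m x) y = h x (D2 w v *m y).
Proof.
case: (Wd_spec v w) => gX1 gX2 HX.
rewrite h_D2 D2_swap mulmxDl mulNmx -scalemxAl (hDr hf) (hNr hf) (hZr hf).
rewrite !(in_u_adj _ _ (gu mp _)) // conjiC; ring.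
Qed.

Lemma D2S v w x y : h (D2 v w *m x) y = h (D2 x y *m v) w.
Proof.
case: (Wd_spec v w) => gX1 gX2 HX; case: (Wd_spec x y) => gY1 gY2 HY.
rewrite !h_D2 HX // HX // HY // HY // /pr.
rewrite (BS mp gX1 gY1) (BS mp gX1 gY2) (BS mp gX2 gY1) (BS mp gX2 gY2); ring.
Qed.

Lemma D2F x y v w : D2 x y * D2 v w - D2 v w * D2 x y =
  D2 (D2 x y *m v) w - D2 v (D2 y x *m w).
Proof.
case: (Wd_spec x y) => gX1 gX2 HX; case: (Wd_spec v w) => gY1 gY2 HY.
case: (Wd_spec (D2 x y *m v) w) => gZ1 gZ2 HZ.
case: (Wd_spec v (D2 y x *m w)) => gU1 gU2 HU.
exact: (comm_core hf mp gX1 gX2 gY1 gY2 gZ1 gZ2 gU1 gU2 (erefl _) (erefl _) (erefl _) (erefl _) (@D2U x y) HY HZ HU).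
Qed.

Lemma part2 : exists br, unitary3Leibniz h br /\ corresponds h br g B.
Proof.
exists (fun x y z => D2 x y *m z); split.
  split.
  - by move=> a v v' w x; rewrite D2L1 mulmxDl -scalemxAl.
  - by move=> a v w w' x; rewrite D2L2 mulmxDl -scalemxAl.
  - by move=> a v w x x'; rewrite mulmxDr -scalemxAr.
  - exact: D2U.
  split.
  - exact: D2S.
  - move=> x y v w z.
    have E := D2F x y v w; rewrite -!mulmxE in E.
    rewrite (mulmxA (D2 x y) (D2 v w) z) (mulmxA (D2 v w) (D2 x y) z).
    have -> : D2 x y *m D2 v w = (D2 (D2 x y *m v) w - D2 v (D2 y x *m w))
       + D2 v w *m D2 x y by rewrite -E subrK.
    by rewrite mulmxDl mulmxBl.
move=> x y; exists (Wd x y).1, (Wd x y).2.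
case: (Wd_spec x y) => g1 g2 H; split => //.
Qed.

End Part2.
Inductive spanI (R : realType) n (Gen : 'M[R[i]]_n -> Prop) : 'M[R[i]]_n -> Prop :=
| sp0 : spanI Gen 0
| spS (r : R) M Y : Gen M -> spanI Gen Y -> spanI Gen (RtoC r *: M + Y).

Section Corr.
Variable R : realType.
Local Notation C := R[i].
Variable n : nat.
Local Notation V := 'cV[C]_n.
Local Notation M := 'M[C]_n.
Variable h : V -> V -> C.
Variable br : V -> V -> V -> V.
Variable g : M -> Prop.
Variable B : M -> M -> R.
Hypothesis hf : hermitian_form h.
Hypothesis mp : metric_faithful_pair h g B.
Hypothesis co : corresponds h br g B.

Lemma co_rep x y : exists X1 X2, RepP h g B x y X1 X2 /\
  forall z, br x y z = (X1 + iC R *: X2) *m z.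
Proof. by have [X1 [X2 [g1 g2 E H]]] := co x y; exists X1, X2. Qed.

Definition Gen (W : M) := exists x y W', RepP h g B x y W W' \/ RepP h g B x y W' W.

Lemma span_sub X : spanI Gen X -> g X.
Proof.
elim => [|r W Y [x [y [W' [[gW _ _]|[_ gW _]]]]] _ gY]; first exact: (g0 mp).
  exact: (gL mp).
exact: (gL mp).
Qed.

Lemma span_subsp : subsp (spanI Gen).
Proof.
split; first exact: sp0.
move=> r X Y sX; elim: sX r => [|r' W Z GW sZ IH] r sY.
  by rewrite scaler0 add0r.
rewrite scalerDr scalerA -RtoCM -addrA; apply: spS => //; exact: IH.
Qed.

Lemma span_gen W : Gen W -> spanI Gen W.
Proof.
move=> GW; have := @spS _ _ Gen 1 W 0 GW (sp0 Gen).
by rewrite RtoC1 scale1r addr0.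
Qed.

Lemma g_span X : g X -> spanI Gen X.
Proof.
apply: (spanning (gsub mp) (BL mp) (BS mp) span_subsp span_sub).
move=> Z gZ H; apply: (h_mx_ext hf) => u v; rewrite mul0mx (h0l hf).
have [X1 [X2 [[g1 g2 HR] _]]] := co_rep u v.
have s1 : spanI Gen X1.
  by apply: span_gen; exists u, v, X2; left; split.
have s2 : spanI Gen X2.
  by apply: span_gen; exists u, v, X1; right; split.
by rewrite HR // /pr (H _ s1) (H _ s2) RtoC0 mulr0 addr0.
Qed.

End Corr.
Lemma cjiC_neg (R : realType) : (- iC R)^* = iC R.
Proof. by rewrite iCE oppE conjE !opprK oppr0. Qed.

Lemma it_eq (R : realType) (t : R[i]) : iC R * t = - (iC R * t) -> t = 0.
Proof.
case: t => p q; rewrite iCE mulE oppE => -[E1 E2].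
rewrite zeroE; congr Complex; lra.
Qed.

Section Transport.
Variable R : realType.
Local Notation C := R[i].
Variables n m : nat.
Local Notation V := 'cV[C]_n.
Local Notation V' := 'cV[C]_m.
Local Notation M := 'M[C]_n.
Local Notation M' := 'M[C]_m.
Variables (h : V -> V -> C) (br : V -> V -> V -> V) (g : M -> Prop) (B : M -> M -> R).
Variables (h' : V' -> V' -> C) (br' : V' -> V' -> V' -> V') (g' : M' -> Prop)
  (B' : M' -> M' -> R).
Hypotheses (hf : hermitian_form h) (mp : metric_faithful_pair h g B)
  (co : corresponds h br g B).
Hypotheses (hf' : hermitian_form h') (mp' : metric_faithful_pair h' g' B')
  (co' : corresponds h' br' g' B').
Variable phi : V -> V'.
Hypotheses (phiL : clinear phi) (phiS : forall w, exists v, phi v = w)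
  (phiI : forall x y, h' (phi x) (phi y) = h x y)
  (phiB : forall x y z, phi (br x y z) = br' (phi x) (phi y) (phi z)).

Lemma phiD u v : phi (u + v) = phi u + phi v.
Proof. by have := phiL 1 u v; rewrite !scale1r. Qed.
Lemma phi0 : phi 0 = 0.
Proof. by have := phiD 0 0; rewrite addr0 -{1}[phi 0]add0r => /addIr. Qed.
Lemma phiZ a u : phi (a *: u) = a *: phi u.
Proof. by have := phiL a u 0; rewrite !addr0 phi0 addr0. Qed.
Lemma phiB' u v : phi (u - v) = phi u - phi v.
Proof. by rewrite phiD -scaleN1r phiZ scaleN1r. Qed.

Lemma conj_anti W W' : g W -> g' W' -> forall u v,
  h' (W' *m phi u - phi (W *m u)) (phi v) = - h' (phi u) (W' *m phi v - phi (W *m v)).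
Proof.
move=> gW gW' u v.
rewrite (hBl hf') (hBr hf') phiI (in_u_adj _ _ (gu mp' gW')) (in_u_adj _ _ (gu mp gW)).
rewrite -phiI; ring.
Qed.

Lemma conj_gen x y W1 W2 W1' W2' : RepP h g B x y W1 W2 ->
  RepP h' g' B' (phi x) (phi y) W1' W2' ->
  conj_by phi W1 W1' /\ conj_by phi W2 W2'.
Proof.
move=> RP RP'.
have E : forall u, W1' *m phi u + iC R *: (W2' *m phi u) =
                   phi (W1 *m u) + iC R *: phi (W2 *m u).
  move=> u.
  have [X1 [X2 [RX EX]]] := co_rep co x y.
  have [Y1 [Y2 [RY EY]]] := co_rep co' (phi x) (phi y).
  have [e1 e2] := RepP_uniq mp RP RX; have [e1' e2'] := RepP_uniq mp' RP' RY.
  rewrite -e1 -e2 in EX; rewrite -e1' -e2' in EY.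
  rewrite scalemxAl -mulmxDl -EY -phiB EX mulmxDl -scalemxAl phiD phiZ //.
case: RP => gW1 gW2 _; case: RP' => gW1' gW2' _.
pose a u := W1' *m phi u - phi (W1 *m u).
pose b u := W2' *m phi u - phi (W2 *m u).
have Eab u : a u = - (iC R *: b u).
  apply/eqP; rewrite -addr_eq0; apply/eqP.
  by rewrite /a /b scalerBr addrACA E -opprD subrr.
have b0 v : b v = 0.
  apply: (hN2 hf') => w; have [u <-] := phiS w.
  have H1 := conj_anti gW1 gW1' u v; have H2 := conj_anti gW2 gW2' u v.
  rewrite -/(a u) -/(a v) -/(b u) -/(b v) in H1 H2.
  rewrite !Eab (hNl hf') (hZl hf') H2 (hNr hf') (hZr hf') in H1.
  by apply: it_eq; move: H1; rewrite conjiC mulrN !opprK mulNr.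
split => v; apply/eqP; rewrite -subr_eq0; apply/eqP.
  by rewrite -/(a v) Eab b0 scaler0 oppr0.
exact: b0.
Qed.

Lemma conj_ex X : g X -> exists2 Y, g' Y & conj_by phi X Y.
Proof.
move=> /(g_span hf mp co); elim => [|r W Z [x [y [W' RP]]] _ [Z' gZ' cZ]].
  by exists 0; [exact: (g0 mp')| move=> v; rewrite !mul0mx phi0].
have [Y1 [Y2 [RY _]]] := co_rep co' (phi x) (phi y).
have [W'' gW'' cW] : exists2 W'', g' W'' & conj_by phi W W''.
  case: RP => RP.
    by have [c1 _] := conj_gen RP RY; exists Y1 => //; case: RY.
  by have [_ c2] := conj_gen RP RY; exists Y2 => //; case: RY.
exists (RtoC r *: W'' + Z'); first exact: (gL mp').
move=> v; rewrite mulmxDl -scalemxAl cW cZ mulmxDl -scalemxAl phiD phiZ //.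
Qed.

Lemma conj_uniq X Y Y' : conj_by phi X Y -> conj_by phi X Y' -> Y = Y'.
Proof.
move=> c c'; apply: mx_ext => w; have [v <-] := phiS w; by rewrite c c'.
Qed.

Lemma conj_B X1 Y1 X2 Y2 : g X1 -> g' Y1 -> conj_by phi X1 Y1 ->
  g X2 -> g' Y2 -> conj_by phi X2 Y2 -> B' Y1 Y2 = B X1 X2.
Proof.
move=> gX1 gY1 c1 /(g_span hf mp co) sX2; elim: sX2 Y2 => [|r W Z [x [y [W' RP]]] sZ IH] Y2 gY2 c2.
  have -> : Y2 = 0 by apply: (conj_uniq c2) => v; rewrite !mul0mx phi0.
  by rewrite (B0r mp' gY1) (B0r mp gX1).
have gZ := span_sub mp sZ.
have [Z' gZ' cZ] := conj_ex gZ.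
have [Y1' [Y2' [RY _]]] := co_rep co' (phi x) (phi y).
have HB W0 W0' : RepP h g B x y W0 W0' -> RepP h' g' B' (phi x) (phi y) Y1' Y2' ->
   B' Y1 Y1' = B X1 W0 /\ B' Y1 Y2' = B X1 W0'.
  move=> [_ _ H] [_ _ H']; apply: ceq.
  by rewrite -/(pr B' Y1 Y1' Y2') -H' // c1 phiI H.
case: RP => RP.
- have [cW _] := conj_gen RP RY; have [gY1' _ _] := RY; have [gW _ _] := RP.
  have -> : Y2 = RtoC r *: Y1' + Z'.
    apply: (conj_uniq c2) => v.
    by rewrite mulmxDl -scalemxAl cW cZ mulmxDl -scalemxAl phiD phiZ.
  rewrite (BL2 mp' r gY1' gZ' gY1) (BL2 mp r gW gZ gX1) (IH _ gZ' cZ).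
  by have [-> _] := HB _ _ RP RY.
- have [_ cW] := conj_gen RP RY; have [_ gY2' _] := RY; have [_ gW _] := RP.
  have -> : Y2 = RtoC r *: Y2' + Z'.
    apply: (conj_uniq c2) => v.
    by rewrite mulmxDl -scalemxAl cW cZ mulmxDl -scalemxAl phiD phiZ.
  rewrite (BL2 mp' r gY2' gZ' gY1) (BL2 mp r gW gZ gX1) (IH _ gZ' cZ).
  by have [_ ->] := HB _ _ RP RY.
Qed.

End Transport.
Section Iso.
Variable R : realType.
Local Notation C := R[i].
Variables n m : nat.
Local Notation V := 'cV[C]_n.
Local Notation V' := 'cV[C]_m.
Local Notation M := 'M[C]_n.
Local Notation M' := 'M[C]_m.
Variables (h : V -> V -> C) (br : V -> V -> V -> V) (g : M -> Prop) (B : M -> M -> R).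
Variables (h' : V' -> V' -> C) (br' : V' -> V' -> V' -> V') (g' : M' -> Prop)
  (B' : M' -> M' -> R).
Hypotheses (hf : hermitian_form h) (mp : metric_faithful_pair h g B)
  (co : corresponds h br g B).
Hypotheses (hf' : hermitian_form h') (mp' : metric_faithful_pair h' g' B')
  (co' : corresponds h' br' g' B').

Lemma iso_fw : iso3Leibniz h br h' br' -> isoPair h g B h' g' B'.
Proof.
move=> [phi [phiL [psi K1 K2] phiB phiI]].
have phiS w : exists v, phi v = w by exists (psi w).
have psiS v : exists w, psi w = v by exists (phi v).
have psiL : clinear psi.
  move=> a u v; apply: (can_inj K1).
  by rewrite K2 phiL !K2.
have psiI x y : h (psi x) (psi y) = h' x y by rewrite -phiI !K2.
have psiB x y z : psi (br' x y z) = br (psi x) (psi y) (psi z).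
  by apply: (can_inj K1); rewrite K2 phiB !K2.
exists phi; split => //; first by exists psi.
split.
- move=> X gX; exact: (conj_ex hf mp co hf' mp' co' phiL phiS phiI phiB gX).
- move=> Y gY.
  have [X gX cX] := conj_ex hf' mp' co' hf mp co psiL psiS psiI psiB gY.
  exists X => // v.
  by rewrite -[v in X *m v](K1 v) cX K2.
- move=> X1 X2 Y1 Y2 gX1 gX2 c1 c2.
  have [Y1' gY1' c1'] := conj_ex hf mp co hf' mp' co' phiL phiS phiI phiB gX1.
  have [Y2' gY2' c2'] := conj_ex hf mp co hf' mp' co' phiL phiS phiI phiB gX2.
  rewrite (conj_uniq phiS c1 c1') (conj_uniq phiS c2 c2').
  exact: (conj_B hf mp co hf' mp' co' phiL phiS phiI phiB gX1 gY1' c1' gX2 gY2' c2').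
Qed.

Lemma iso_bw : isoPair h g B h' g' B' -> iso3Leibniz h br h' br'.
Proof.
move=> [phi [phiL bij phiI [cex cex' Bp]]].
exists phi; split => // x y z.
have [X1 [X2 [[gX1 gX2 HX] EX]]] := co_rep co x y.
have [Y1 gY1 c1] := cex X1 gX1; have [Y2 gY2 c2] := cex X2 gX2.
have RY : RepP h' g' B' (phi x) (phi y) Y1 Y2.
  split => // Y gY; have [X gX cY] := cex' Y gY.
  rewrite cY phiI HX // /pr.
  by rewrite (Bp _ _ _ _ gX gX1 cY c1) (Bp _ _ _ _ gX gX2 cY c2).
have [Z1 [Z2 [RZ EZ]]] := co_rep co' (phi x) (phi y).
have [e1 e2] := RepP_uniq mp' RY RZ.
rewrite EZ -e1 -e2 EX mulmxDl -scalemxAl (phiD phiL) (phiZ phiL).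
by rewrite mulmxDl -scalemxAl c1 c2.
Qed.

End Iso.

Theorem mainTheorem6 (R : realType) :
  (* every unitary 3-Leibniz algebra corresponds to some pair *)
  (forall (n : nat) (h : 'cV[R[i]]_n -> 'cV[R[i]]_n -> R[i])
          (br : 'cV[R[i]]_n -> 'cV[R[i]]_n -> 'cV[R[i]]_n -> 'cV[R[i]]_n),
      hermitian_form h -> unitary3Leibniz h br ->
      exists (g : 'M[R[i]]_n -> Prop) (B : 'M[R[i]]_n -> 'M[R[i]]_n -> R),
        metric_faithful_pair h g B /\ corresponds h br g B) /\
  (* every pair corresponds to some unitary 3-Leibniz algebra *)
  (forall (n : nat) (h : 'cV[R[i]]_n -> 'cV[R[i]]_n -> R[i])
          (g : 'M[R[i]]_n -> Prop) (B : 'M[R[i]]_n -> 'M[R[i]]_n -> R),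
      hermitian_form h -> metric_faithful_pair h g B ->
      exists br : 'cV[R[i]]_n -> 'cV[R[i]]_n -> 'cV[R[i]]_n -> 'cV[R[i]]_n,
        unitary3Leibniz h br /\ corresponds h br g B) /\
  (* the correspondence is well defined and injective on isomorphism classes *)
  (forall (n m : nat)
          (h : 'cV[R[i]]_n -> 'cV[R[i]]_n -> R[i])
          (br : 'cV[R[i]]_n -> 'cV[R[i]]_n -> 'cV[R[i]]_n -> 'cV[R[i]]_n)
          (g : 'M[R[i]]_n -> Prop) (B : 'M[R[i]]_n -> 'M[R[i]]_n -> R)
          (h' : 'cV[R[i]]_m -> 'cV[R[i]]_m -> R[i])
          (br' : 'cV[R[i]]_m -> 'cV[R[i]]_m -> 'cV[R[i]]_m -> 'cV[R[i]]_m)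
          (g' : 'M[R[i]]_m -> Prop) (B' : 'M[R[i]]_m -> 'M[R[i]]_m -> R),
      hermitian_form h -> unitary3Leibniz h br -> metric_faithful_pair h g B ->
      corresponds h br g B ->
      hermitian_form h' -> unitary3Leibniz h' br' -> metric_faithful_pair h' g' B' ->
      corresponds h' br' g' B' ->
      (iso3Leibniz h br h' br' <-> isoPair h g B h' g' B')).
Proof.
split; first by move=> n h br hf UL; apply: part1.
split; first by move=> n h g B hf mp; apply: part2.
move=> n m h br g B h' br' g' B' hf UL mp co hf' UL' mp' co'; split.
  exact: iso_fw.
exact: iso_bw.
Qed.
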